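(* For every integer $n>16$, the generalized Petersen graph $GP(n,3)$ is not $1$-distance-balanced.
   Context: For a connected graph $G$ and $x,y\in V(G)$, $d_G(x,y)$ denotes the distance. Let $W_{xy}=\{w\in V(G): d_G(w,x)<d_G(w,y)\}$. $G$ is called $\ell$-distance-balanced if $|W_{xy}|=|W_{yx}|$ for every pair $x,y\in V(G)$ with $d_G(x,y)=\ell$. For integers $n\ge 3$ and $1\le k<n/2$, the generalized Petersen graph $GP(n,k)$ has vertex set $\{u_i: i\in\mathbb{Z}_n\}\cup\{v_i: i\in\mathbb{Z}_n\}$ and edge set $\{u_iu_{i+1}: i\in\mathbb{Z}_n\}\cup\{v_iv_{i+k}: i\in\mathbb{Z}_n\}\cup\{u_iv_i: i\in\mathbb{Z}_n\}$. *)

(* Defs.v *)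
From mathcomp Require Import all_boot.
Set Implicit Arguments. Unset Strict Implicit. Unset Printing Implicit Defensive.

Section Graphs.
Variables (T : finType) (e : rel T).

Definition walk_len (m : nat) (x y : T) : bool :=
  [exists s : m.-tuple T, path e x s && (last x s == y)].

(* graph distance: least m with a walk of length m from x to y.
   (A shortest walk never has more than #|T| - 1 edges; for a disconnected
   pair the value defaults to #|T|, irrelevant for connected graphs.) *)
Definition gdist (x y : T) : nat := find (fun m => walk_len m x y) (iota 0 #|T|).

Definition Wset (x y : T) : {set T} := [set w | gdist w x < gdist w y].

Definition dist_balanced (l : nat) : Prop :=
  forall x y : T, gdist x y = l -> #|Wset x y| = #|Wset y x|.
End Graphs.

(* Generalized Petersen graph GP(n,k): vertices (false, i) = u_i, (true, i) = v_i,
   i in Z_n represented by 'I_n. Edges u_i u_{i+1}, v_i v_{i+k}, u_i v_i. *)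
Definition GP_adj (n k : nat) : rel (bool * 'I_n) :=
  fun x y =>
    let: (b, i) := x in let: (c, j) := y in
    if b == c then
      let s := if b then k else 1 in
      (val j == (val i + s) %% n) || (val i == (val j + s) %% n)
    else val i == val j.

Arguments GP_adj n k : clear implicits.

(* Main.v *)
Require Import Defs.
From mathcomp Require Import all_boot.
From mathcomp Require Import zify.

Section GP.
Variable n : nat.
Hypothesis n16 : 16 < n.
Local Notation V := (bool * 'I_n)%type.
Local Notation e := (GP_adj n 3).

Lemma n_gt0 : 0 < n. Proof. by apply: leq_trans n16. Qed.
Definition pos k : 'I_n := Ordinal (ltn_pmod k n_gt0).
Definition u0 : V := (false, pos 0).
Definition v0 : V := (true, pos 0).

Definition walk m (x y : V) :=
  exists s : seq V, [/\ size s = m, path e x s & last x s = y].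

Lemma walk_lenP {m x y} : walk m x y -> walk_len e m x y.
Proof.
case=> s [Hs Hp Hl]; apply/existsP.
have Hs' : size s == m by apply/eqP.
by exists (Tuple Hs'); rewrite /= Hp Hl eqxx.
Qed.

Lemma walk_lenE {m x y} : walk_len e m x y -> walk m x y.
Proof.
by case/existsP=> t /andP [Hp /eqP Hl]; exists (val t); rewrite size_tuple.
Qed.

Lemma gdist_le {m x y} : walk m x y -> m < #|{: V}| -> gdist e x y <= m.
Proof.
move=> W Hm; rewrite /gdist leqNgt; apply/negP => Hlt.
have := before_find 0 Hlt.
by rewrite nth_iota ?size_iota // add0n (walk_lenP W).
Qed.

Lemma gdist_walk {x y} : gdist e x y < #|{: V}| -> walk (gdist e x y) x y.
Proof.
move=> H; apply: walk_lenE.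
have Hh : has (fun m => walk_len e m x y) (iota 0 #|{: V}|).
  by rewrite has_find size_iota.
by have := nth_find 0 Hh; rewrite nth_iota // add0n.
Qed.

Lemma closer w : (exists m, m < #|{: V}| /\ walk m w v0) ->
  (forall L, walk L w u0 -> exists m, m < L /\ walk m w v0) ->
  gdist e w v0 < gdist e w u0.
Proof.
move=> [m0 [Hm0 W0]] H.
have [Hlt|Hge] := ltnP (gdist e w u0) #|{: V}|.
  have [m [Hm Wm]] := H _ (gdist_walk Hlt).
  exact: leq_ltn_trans (gdist_le Wm (ltn_trans Hm Hlt)) Hm.
apply: leq_ltn_trans (gdist_le W0 Hm0) _.
exact: leq_trans Hm0 Hge.
Qed.

Lemma walk0 x : walk 0 x x. Proof. by exists [::]. Qed.
Lemma walk1 {x y} : e x y -> walk 1 x y.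
Proof. by move=> H; exists [:: y]; rewrite /= H. Qed.
Lemma walk_cat {a b x y z} : walk a x y -> walk b y z -> walk (a + b) x z.
Proof.
case=> s1 [H1 P1 L1] [s2 [H2 P2 L2]]; exists (s1 ++ s2).
by rewrite size_cat cat_path last_cat P1 L1 P2 H1 H2.
Qed.

Lemma cgD {a b} c : a = b %[mod n] -> a + c = b + c %[mod n].
Proof. by move=> H; rewrite -modnDml H modnDml. Qed.

Lemma e_fwdO (i : 'I_n) : e (false, i) (false, pos (i + 1)).
Proof. by rewrite /GP_adj /=; apply/orP; left. Qed.
Lemma e_bwdO (i : 'I_n) : e (false, i) (false, pos (i + (n - 1))).
Proof.
rewrite /GP_adj /= modnDml -addnA subnK ?n_gt0 // modnDr.
by apply/orP; right; rewrite modn_small.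
Qed.
Lemma e_fwdI (i : 'I_n) : e (true, i) (true, pos (i + 3)).
Proof. by rewrite /GP_adj /=; apply/orP; left. Qed.
Lemma e_bwdI (i : 'I_n) : e (true, i) (true, pos (i + (n - 3))).
Proof.
have h3 : 3 <= n by apply: leq_trans n16.
rewrite /GP_adj /= modnDml -addnA subnK // modnDr.
by apply/orP; right; rewrite modn_small.
Qed.
Lemma e_spoke (i : 'I_n) : e (false, i) (true, i).
Proof. by rewrite /GP_adj /=. Qed.


Lemma walk_snoc {k x y z} : walk k x y -> e y z -> walk k.+1 x z.
Proof. by move=> W E; rewrite -addn1; apply: walk_cat W (walk1 E). Qed.

Lemma seg_fwdO (i : 'I_n) k :
  exists j : 'I_n, walk k (false, i) (false, j) /\ j = i + k %[mod n].
Proof.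
elim: k => [|k [j [W Hj]]]; first by exists i; split; [apply: walk0|rewrite addn0].
exists (pos (j + 1)); split; first exact: walk_snoc W (e_fwdO j).
by rewrite /= modn_mod (cgD 1 Hj) addn1 addnS.
Qed.

Lemma seg_bwdO (i : 'I_n) k :
  exists j : 'I_n, walk k (false, i) (false, j) /\ j + k = i %[mod n].
Proof.
elim: k => [|k [j [W Hj]]]; first by exists i; split; [apply: walk0|rewrite addn0].
exists (pos (j + (n - 1))); split; first exact: walk_snoc W (e_bwdO j).
rewrite /= modnDml.
have -> : j + (n - 1) + k.+1 = (j + k) + n by have := n_gt0; lia.
by rewrite modnDr.
Qed.

Lemma seg_fwdI (i : 'I_n) k :
  exists j : 'I_n, walk k (true, i) (true, j) /\ j = i + 3 * k %[mod n].
Proof.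
elim: k => [|k [j [W Hj]]]; first by exists i; split; [apply: walk0|rewrite muln0 addn0].
exists (pos (j + 3)); split; first exact: walk_snoc W (e_fwdI j).
rewrite /= modn_mod (cgD 3 Hj).
by have -> : i + 3 * k + 3 = i + 3 * k.+1 by lia.
Qed.

Lemma seg_bwdI (i : 'I_n) k :
  exists j : 'I_n, walk k (true, i) (true, j) /\ j + 3 * k = i %[mod n].
Proof.
elim: k => [|k [j [W Hj]]]; first by exists i; split; [apply: walk0|rewrite muln0 addn0].
exists (pos (j + (n - 3))); split; first exact: walk_snoc W (e_bwdI j).
rewrite /= modnDml.
have -> : j + (n - 3) + 3 * k.+1 = (j + 3 * k) + n by lia.
by rewrite modnDr.
Qed.


Lemma walkV (i : 'I_n) c d :
  exists k : 'I_n, walk (c + d) (true, i) (true, k) /\ k + 3 * d = i + 3 * c %[mod n].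
Proof.
have [j [W1 Hj]] := seg_fwdI i c.
have [k [W2 Hk]] := seg_bwdI j d.
by exists k; split; [apply: walk_cat W1 W2 | rewrite Hk Hj].
Qed.

Lemma walkW (i : 'I_n) a b c d :
  exists k : 'I_n, walk (a + b + 1 + c + d) (false, i) (true, k) /\ k + b + 3 * d = i + a + 3 * c %[mod n].
Proof.
have [j1 [W1 H1]] := seg_fwdO i a.
have [j2 [W2 H2]] := seg_bwdO j1 b.
have [k [W3 H3]] := walkV j2 c d.
exists k; split.
  rewrite -addnA; apply: walk_cat W3.
  exact: walk_cat (walk_cat W1 W2) (walk1 (e_spoke j2)).
rewrite (_ : k + b + 3 * d = (k + 3 * d) + b); last by lia.
rewrite (cgD b H3) (_ : j2 + 3 * c + b = (j2 + b) + 3 * c); last by lia.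
by rewrite (cgD _ H2) (cgD _ H1).
Qed.

Lemma mod_cases a b : a = b %[mod n] -> a < n + n -> b < n + n ->
  [\/ a = b, a = b + n | b = a + n].
Proof.
move=> H ha hb.
have Ea := divn_eq a n; have Eb := divn_eq b n.
have qa : a %/ n < 2 by rewrite ltn_divLR ?n_gt0 //; lia.
have qb : b %/ n < 2 by rewrite ltn_divLR ?n_gt0 //; lia.
move: qa qb Ea Eb; rewrite H; move: (b %% n) => r.
case: (a %/ n) => [|[|//]]; case: (b %/ n) => [|[|//]] => _ _; rewrite ?mul0n ?mul1n => -> ->; first [by apply: Or31; lia | by apply: Or32; lia | by apply: Or33; lia].
Qed.

Lemma inv (s : seq V) (x : V) : path e x s -> exists Ap Am Bp Bm S,
  [/\ size s = Ap + Am + Bp + Bm + S,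
      (last x s).2 + Am + 3 * Bm = x.2 + Ap + 3 * Bp %[mod n],
      odd S = (x.1 != (last x s).1) &
      (~~ x.1 -> ~~ (last x s).1 -> S = 0 -> Bp + Bm = 0)].
Proof.
elim: s x => [|x' s IH] x /=.
  by move=> _; exists 0, 0, 0, 0, 0; split => //; rewrite eqxx.
case/andP => E P.
have [Ap [Am [Bp [Bm [S [Hs Hc Ho Hb]]]]]] := IH x' P.
clear P; move: E Hc Ho Hb; move: (last x' s) => y.
case: x => [b i]; case: x' => [c i'] /=.
rewrite /GP_adj; case: b; case: c => /=.
- case/orP => /eqP E Hc Ho Hb.
  + exists Ap, Am, Bp.+1, Bm, S; split => //; first by lia.
    rewrite Hc E -addnA modnDml; congr (_ %% _); lia.
  + exists Ap, Am, Bp, Bm.+1, S; split => //; first by lia.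
    rewrite (_ : y.2 + Am + 3 * Bm.+1 = (y.2 + Am + 3 * Bm) + 3); last by lia.
    rewrite (cgD 3 Hc) E -[in RHS]addnA modnDml; congr (_ %% _); lia.
- move=> /eqP E Hc Ho Hb.
  exists Ap, Am, Bp, Bm, S.+1; split => //; first by lia.
  + by rewrite Hc E.
  + by rewrite /= Ho; case: (y.1).
- move=> /eqP E Hc Ho Hb.
  exists Ap, Am, Bp, Bm, S.+1; split => //; first by lia.
  + by rewrite Hc E.
  + by rewrite /= Ho; case: (y.1).
- case/orP => /eqP E Hc Ho Hb.
  + exists Ap.+1, Am, Bp, Bm, S; split => //; first by lia.
    rewrite Hc E -addnA modnDml; congr (_ %% _); lia.
  + exists Ap, Am.+1, Bp, Bm, S; split => //; first by lia.
    rewrite (_ : y.2 + Am.+1 + 3 * Bm = (y.2 + Am + 3 * Bm) + 1); last by lia.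
    rewrite (cgD 1 Hc) E -[in RHS]addnA modnDml; congr (_ %% _); lia.
Qed.


Lemma cardV : #|{: V}| = n + n.
Proof. by rewrite card_prod card_bool card_ord; lia. Qed.

Lemma fin_v0 (k : 'I_n) X Y : (k + X) %% n = Y %% n -> X %% n = Y %% n ->
  (true, k) = v0.
Proof.
move=> H1 H2; rewrite -H2 in H1.
have : k + X == 0 + X %[mod n] by rewrite H1.
rewrite eqn_modDr mod0n modn_small // => /eqP Hk.
by rewrite /v0; congr pair; apply: val_inj; rewrite /= mod0n.
Qed.

Lemma u_case (j : 'I_n) : 2 < j -> j < n - 2 ->
  gdist e (false, j) v0 < gdist e (false, j) u0.
Proof.
move=> j2 jn; apply: closer.
  have [k [W H]] := walkW j 0 j 0 0.
  exists (0 + j + 1 + 0 + 0); split; first by rewrite cardV; have := ltn_ord j; lia.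
  suff <- : (true, k) = v0 by []; apply: (@fin_v0 k j j) => //.
  by move: H; rewrite !muln0 !addn0.
move=> L [s [Hs P Hl]].
have [Ap [Am [Bp [Bm [S [Hs' Hc Ho Hb]]]]]] := inv _ _ P.
rewrite Hl /= mod0n add0n in Hc Ho Hb.
have jn' := ltn_ord j.
case: (posnP (Bp + Bm)) => HB.
  have Bp0 : Bp = 0 by lia.
  have Bm0 : Bm = 0 by lia.
  subst Bp Bm; move: Hc; rewrite !muln0 !addn0 => Hc.
  case: (leqP 3 Ap) => hA.
    have [k [W H]] := walkW j (Ap - 3) Am 1 0.
    exists (Ap - 3 + Am + 1 + 1 + 0); split; first by lia.
    suff <- : (true, k) = v0 by [].
    apply: (@fin_v0 k Am (j + Ap)) => //.
    rewrite (_ : k + Am = k + Am + 3 * 0); last by lia.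
    rewrite H; congr (_ %% _); lia.
  case: (leqP 3 Am) => hM.
    have [k [W H]] := walkW j Ap (Am - 3) 0 1.
    exists (Ap + (Am - 3) + 1 + 0 + 1); split; first by lia.
    suff <- : (true, k) = v0 by [].
    apply: (@fin_v0 k Am (j + Ap)) => //.
    rewrite (_ : k + Am = k + (Am - 3) + 3 * 1); last by lia.
    rewrite H; congr (_ %% _); lia.
  by case: (mod_cases _ _ Hc); lia.
have S2 : 2 <= S.
  move: Ho Hb; case: (S) => [|[|S']] //= _ Hb.
  by have := Hb isT isT erefl; lia.
have [k [W H]] := walkW j Ap Am Bp Bm.
exists (Ap + Am + 1 + Bp + Bm); split; first by lia.
suff <- : (true, k) = v0 by [].
apply: (@fin_v0 k (Am + 3 * Bm) (j + Ap + 3 * Bp)) => //.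
by rewrite addnA.
Qed.


Lemma mod_eq a b : a = b \/ a = b + n -> a %% n = b %% n.
Proof. by case=> ->; rewrite ?modnDr. Qed.

Lemma v_case (i : 'I_n) c d : c + d < n -> (i + 3 * c) %% n = (3 * d) %% n ->
  (forall Ap Am Bp Bm, Am + 3 * Bm = i + Ap + 3 * Bp %[mod n] ->
     c + d <= Ap + Am + Bp + Bm) ->
  gdist e (true, i) v0 < gdist e (true, i) u0.
Proof.
move=> hcd Hi Hlb.
have Wv : walk (c + d) (true, i) v0.
  have [k [W H]] := walkV i c d.
  suff <- : (true, k) = v0 by [].
  by apply: (@fin_v0 k (3 * d) (i + 3 * c)) => //; rewrite Hi.
apply: closer; first by exists (c + d); split => //; rewrite cardV; lia.
move=> L [s [Hs P Hl]].
have [Ap [Am [Bp [Bm [S [Hs' Hc Ho Hb]]]]]] := inv _ _ P.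
rewrite Hl /= mod0n add0n in Hc Ho Hb.
have := Hlb _ _ _ _ Hc.
have S1 : 0 < S by case: (S) Ho.
by move=> hh; exists (c + d); split => //; lia.
Qed.

Definition idx t := nth 0 [:: 0; 3; 6; 9; n - 3; n - 6] t.
Definition f (k : 'I_(n + 1)) : V :=
  if k < n - 5 then (false, pos (k + 3)) else (true, pos (idx (k - (n - 5)))).

Lemma idx_lt t : idx t < n.
Proof. by do 6?[case: t => [|t]]; rewrite /idx /= ?nth_nil; lia. Qed.

Lemma idx_inj t1 t2 : t1 <= 5 -> t2 <= 5 -> idx t1 = idx t2 -> t1 = t2.
Proof.
by do 6?[case: t1 => [|t1]]; do 6?[case: t2 => [|t2]]; rewrite /idx /= ?nth_nil; lia.
Qed.

Lemma f_inj : injective f.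
Proof.
move=> k1 k2; rewrite /f; have := ltn_ord k1; have := ltn_ord k2.
move=> l2 l1; case: ifP => h1; case: ifP => h2 // [] H; apply: val_inj => /=.
  rewrite !modn_small in H; lia.
have E := H; rewrite /= !modn_small ?idx_lt in E.
have b1 : k1 - (n - 5) <= 5 by lia.
have b2 : k2 - (n - 5) <= 5 by lia.
have := idx_inj _ _ b1 b2 E; lia.
all: by [].
Qed.

Lemma f_in k : f k \in Wset e v0 u0.
Proof.
rewrite inE /f; have := ltn_ord k; case: ifP => h hk.
  by apply: u_case; rewrite /= modn_small; lia.
have : k - (n - 5) <= 5 by lia.
move: (k - (n - 5)) => t.
do 6?[case: t => [|t]] => // _; rewrite /idx /=.
- apply: (v_case _ 0 0) => /=; rewrite ?(modn_small (_ : 0 < n)); try lia;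
  first [by apply: mod_eq; lia | move=> Ap Am Bp Bm Hc; rewrite leqNgt; apply/negP => Hlt;
         by case: (mod_cases _ _ Hc); lia].
- apply: (v_case _ 0 1) => /=; rewrite ?(modn_small (_ : 3 < n)); try lia;
  first [by apply: mod_eq; lia | move=> Ap Am Bp Bm Hc; rewrite leqNgt; apply/negP => Hlt;
         by case: (mod_cases _ _ Hc); lia].
- apply: (v_case _ 0 2) => /=; rewrite ?(modn_small (_ : 6 < n)); try lia;
  first [by apply: mod_eq; lia | move=> Ap Am Bp Bm Hc; rewrite leqNgt; apply/negP => Hlt;
         by case: (mod_cases _ _ Hc); lia].
- apply: (v_case _ 0 3) => /=; rewrite ?(modn_small (_ : 9 < n)); try lia;
  first [by apply: mod_eq; lia | move=> Ap Am Bp Bm Hc; rewrite leqNgt; apply/negP => Hlt;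
         by case: (mod_cases _ _ Hc); lia].
- apply: (v_case _ 1 0) => /=; rewrite ?(modn_small (_ : n - 3 < n)); try lia;
  first [by apply: mod_eq; lia | move=> Ap Am Bp Bm Hc; rewrite leqNgt; apply/negP => Hlt;
         by case: (mod_cases _ _ Hc); lia].
- apply: (v_case _ 2 0) => /=; rewrite ?(modn_small (_ : n - 6 < n)); try lia;
  first [by apply: mod_eq; lia | move=> Ap Am Bp Bm Hc; rewrite leqNgt; apply/negP => Hlt;
         by case: (mod_cases _ _ Hc); lia].
Qed.

Lemma main : ~ dist_balanced e 1.
Proof.
move=> H.
have D1 : gdist e u0 v0 = 1.
  apply/eqP; rewrite eqn_leq; apply/andP; split.
    by apply: gdist_le; [apply: walk1; apply: e_spoke | rewrite cardV; lia].
  rewrite lt0n; apply/negP => /eqP H0.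
  have := @gdist_walk u0 v0; rewrite H0 cardV => /(_ ltac:(lia)).
  by case=> s [/size0nil -> _ /=].
have := H _ _ D1.
have Hc : n + 1 <= #|Wset e v0 u0|.
  rewrite -[n + 1]card_ord -(card_imset _ f_inj).
  apply: subset_leq_card; apply/subsetP => x /imsetP [k _ ->]; exact: f_in.
have I0 : Wset e u0 v0 :&: Wset e v0 u0 = set0.
  by apply/setP => w; rewrite !inE; apply/negbTE/andP => -[]; lia.
have := cardsUI (Wset e u0 v0) (Wset e v0 u0).
rewrite I0 cards0 addn0 => Hu.
have := max_card (Wset e u0 v0 :|: Wset e v0 u0); rewrite cardV; lia.
Qed.

End GP.

Theorem proposition2p1 : forall n : nat, 16 < n -> ~ dist_balanced (GP_adj n 3) 1.
Proof. by move=> n n16; apply: main. Qed.
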